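(* Let $X$ be a finite topological space and let $Y$ be a $T_1$-space homotopy equivalent to $X$. Then $X$ is a disjoint union of contractible spaces. *)

(* Defs.v *)
From HB Require Import structures.
From mathcomp Require Import all_boot all_order all_algebra.
From mathcomp Require Import all_classical all_reals all_analysis.
From mathcomp Require Import Rstruct Rstruct_topology.


Set Implicit Arguments.
Unset Strict Implicit.
Unset Printing Implicit Defensive.

Import Order.TTheory GRing.Theory Num.Theory.
Local Open Scope classical_set_scope.
Local Open Scope ring_scope.

Definition unit_interval : set Rdefinitions.R :=
  [set t : Rdefinitions.R | (0 <= t)%R /\ (t <= 1)%R].
Definition Itype : topologicalType := set_type unit_interval.

Definition homotopic {X Y : topologicalType} (f g : X -> Y) : Prop :=
  exists H : (Itype * X)%type -> Y,
    continuous H /\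
    (forall (t : Itype) (x : X), val t = 0%R -> H (t, x) = f x) /\
    (forall (t : Itype) (x : X), val t = 1%R -> H (t, x) = g x).

Definition homotopy_equivalent (X Y : topologicalType) : Prop :=
  exists (f : X -> Y) (g : Y -> X),
    continuous f /\ continuous g /\
    homotopic (g \o f) (fun x => x) /\ homotopic (f \o g) (fun y => y).

Definition contractible (X : topologicalType) : Prop :=
  exists x0 : X, homotopic (fun x : X => x) (fun _ => x0).

(* X is (homeomorphic to) the topological disjoint union of contractible
   spaces: X is partitioned into pairwise disjoint open subsets, each of
   which is contractible in the subspace topology. *)
Definition disjoint_union_of_contractibles (X : topologicalType) : Prop :=
  exists P : set (set X),
    (forall U, P U -> open U /\ contractible (set_type U : topologicalType)) /\
    (forall U V, P U -> P V -> U `&` V !=set0 -> U = V) /\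
    (forall x : X, exists U, P U /\ U x).

(* Main.v *)
Require Import Defs.
From HB Require Import structures.
From mathcomp Require Import all_boot all_order all_algebra.
From mathcomp Require Import all_classical all_reals all_analysis.
From mathcomp Require Import Rstruct Rstruct_topology.
From mathcomp Require Import lra.
Import numFieldNormedType.Exports.
Local Open Scope classical_set_scope.

Lemma path_stays (X : topologicalType) (p : Itype -> X) (U : set X) (t1 : Itype) :
  continuous p -> open U -> closed U -> U (p t1) -> forall t, U (p t).
Proof.
move=> cp oU cU Ut1 t.
pose q := valL_ (p t1) p.
have qE : forall s : Itype, q (val s) = p s.
  move=> s; have := valLK (p t1) p; move/(congr1 (fun h => h s)).
  by [].
have cq : {within unit_interval, continuous q}.
  exact/(@subspace_valL_continuousP' _ unit_interval _ (p t1) p).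
have con : connected (q @` unit_interval).
  apply: connected_continuous_connected => //.
  have -> : unit_interval = `[0%R, 1%R]%classic.
    by rewrite set_itvcc; apply/seteqP; split => x /=; [case=> -> ->|move/andP].
  exact: segment_connected.
set S := q @` unit_interval.
have St : forall s : Itype, S (p s).
  by move=> s; rewrite -qE; exists (val s) => //; exact: set_valP.
have : S `&` U = S.
  apply: con.
  - by exists (p t1); split.
  - by exists U.
  - by exists U.
by move=> SU; have := St t; rewrite -SU => -[].
Qed.

Lemma pair_cont (A B C : topologicalType) (a : A -> B) (b : A -> C) :
  continuous a -> continuous b -> continuous (fun z => (a z, b z)).
Proof. by move=> ca cb z; apply: cvg_pair; [exact: ca|exact: cb]. Qed.

Lemma fst_cont (A B : topologicalType) : continuous (@fst A B).
Proof. by move=> z; exact: cvg_fst. Qed.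

Lemma snd_cont (A B : topologicalType) : continuous (@snd A B).
Proof. by move=> z; exact: cvg_snd. Qed.

Lemma rev_mem (t : Itype) : (1 - val t)%R \in unit_interval.
Proof.
apply: mem_set; have := set_valP t; rewrite /unit_interval /= => -[h0 h1].
split; lra.
Qed.

Definition revI (t : Itype) : Itype := exist _ (1 - val t)%R (rev_mem t).

Lemma revI_cont : continuous revI.
Proof.
apply: (@continuous_comp_initial _ _ _ (@set_val _ unit_interval)).
move=> t.
have h : {for t, continuous ((cst 1%R : Itype -> Rdefinitions.R^o) - @set_val _ unit_interval)%R}.
  apply: continuousB; first exact: cst_continuous.
  exact: initial_continuous.
exact: h.
Qed.

Lemma id_cont (A : topologicalType) : continuous (@id A).
Proof. by move=> x; exact: cvg_id. Qed.

Lemma i0_mem : (0%R : Rdefinitions.R) \in unit_interval.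
Proof. by apply: mem_set; rewrite /unit_interval /=; split; lra. Qed.
Lemma i1_mem : (1%R : Rdefinitions.R) \in unit_interval.
Proof. by apply: mem_set; rewrite /unit_interval /=; split; lra. Qed.
Definition i0 : Itype := exist _ 0%R i0_mem.
Definition i1 : Itype := exist _ 1%R i1_mem.

Theorem mainTheorem5 (X Y : topologicalType) :
  finite_set [set: X] ->
  accessible_space Y ->
  homotopy_equivalent X Y ->
  disjoint_union_of_contractibles X.
Proof.
move=> finX accY [f [g [cf [cg [[H [cH [H0 H1]]] _]]]]].
pose F x := f @^-1` [set f x].
have clF x : open (F x) /\ closed (F x).
  split; last first.
    by apply: (proj1 (continuous_closedP f) cf); exact: accessible_closed_set1.
  have -> : F x = ~` (f @^-1` (range f `\ f x)).
    apply/seteqP; split => y /=.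
      by rewrite /F /= => -> [].
    rewrite /F /=; move=> h; apply: contrapT => ne; apply: h; split => //.
    by exists y.
  apply: closed_openC; apply: (proj1 (continuous_closedP f) cf).
  apply: (proj1 (@accessible_finite_set_closed Y) accY).
  apply: (sub_finite_set _ (finite_image f finX)).
  by move=> z [].
have stay x (y : X) : F x y -> forall t, F x (H (t, y)).
  move=> Fy t.
  apply: (@path_stays X (fun s => H (s, y)) (F x) i1) => //.
  - move=> s.
    have := continuous_comp (@pair_cont Itype Itype X id (cst y) (@id_cont Itype) (cst_continuous (x:=y)) s) (cH _).
    exact.
  - exact: (clF x).1.
  - exact: (clF x).2.
  - by rewrite H1.
exists [set V | exists x, V = F x]; split; [|split].
- move=> _ [x ->]; split; first exact: (clF x).1.
  have gx : F x (g (f x)) by have := stay x x erefl i0; rewrite H0.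
  exists (exist _ (g (f x)) (mem_set gx)).
  exists (fun z : Itype * (F x) => (exist _ (H (revI z.1, val z.2))
      (mem_set (stay x _ (set_valP z.2) _)) : F x)); split; [|split].
  + apply: (@continuous_comp_initial _ _ _ (@set_val _ (F x))).
    have c1 : continuous (fun w : Itype * F x => revI w.1).
      by move=> w; have := continuous_comp (@fst_cont _ _ w) (revI_cont _); exact.
    have c2 : continuous (fun w : Itype * F x => set_val w.2).
      by move=> w; have := continuous_comp (@snd_cont _ _ w) (@initial_continuous _ _ (@set_val _ (F x)) _); exact.
    move=> z; have := continuous_comp (@pair_cont _ _ _ _ _ c1 c2 z) (cH _).
    exact.
  + move=> t u ht; apply: val_inj; rewrite /= H1 //= ht; lra.
  + move=> t u ht; apply: val_inj; rewrite /= H0 /=.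
      by have := set_valP u; rewrite /F /= => ->.
    rewrite ht; lra.
- move=> _ _ [x ->] [y ->] [z [/= zx zy]].
  by rewrite /F -zx -zy.
- by move=> x; exists (F x); split; [exists x|].
Qed.
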